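(* Let $(\mathcal A,d)$ be a DGA and let $a,b_1,\dots,b_n\in\mathcal A$ be closed with $|a|$ even and each $a\wedge b_i$ exact. If $a',b_1',\dots,b_n'\in\mathcal A$ are closed with $[a']=[a]$ and $[b_i']=[b_i]$ in $H(\mathcal A)$, then $\langle a';b_1',\dots,b_n'\rangle$ is defined and $\langle a';b_1',\dots,b_n'\rangle=\langle a;b_1,\dots,b_n\rangle$. That is, the $a$-Massey product depends only on the cohomology classes $[a],[b_i]$.
   Context: A DGA is a graded-commutative differential graded algebra over $\mathbb R$; $|x|$ denotes degree and $\overline{x}=(-1)^{|x|}x$. Given closed $a,b_1,\dots,b_n\in\mathcal A$ with $|a|$ even and each $a\wedge b_i$ exact, the $a$-Massey product is the subset of $H(\mathcal A)$ $$\langle a;b_1,\dots,b_n\rangle=\Big\{\Big[\sum_{i=1}^n\overline{\xi_1}\wedge\cdots\wedge\overline{\xi_{i-1}}\wedge b_i\wedge\xi_{i+1}\wedge\cdots\wedge\xi_n\Big]\ :\ d\xi_i=a\wedge b_i\Big\}$$ (the elements inside the brackets are closed). *)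

(* Defs.v *)
From HB Require Import structures.
From mathcomp Require Import all_boot all_order all_algebra.
From mathcomp Require Import reals.
Set Implicit Arguments. Unset Strict Implicit. Unset Printing Implicit Defensive.
Import Order.TTheory GRing.Theory Num.Theory.
Local Open Scope ring_scope.

Definition sgnz {R : realType} (z : int) : R := (-1) ^+ `|z|%N.

(* A (Z-graded) graded-commutative differential graded algebra over R:
   an associative unital R-algebra A, together with
   - deg k : the subspace A^k of homogeneous elements of degree k,
     with A = (+)_k A^k (direct sum: spanning + independence),
   - a linear differential d of degree +1, d o d = 0,
     satisfying the graded Leibniz rule,
   - graded commutativity x y = (-1)^{|x||y|} y x. *)
Record is_dga (R : realType) (A : algType R) (deg : int -> pred A)
    (d : A -> A) : Prop := {
  dga_hom0 : forall k, 0 \in deg k;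
  dga_homL : forall k (c : R) x y, x \in deg k -> y \in deg k ->
               c *: x + y \in deg k;
  dga_span : forall x : A, exists (s : seq int) (xs : int -> A),
               (forall k, xs k \in deg k) /\ x = \sum_(k <- s) xs k;
  dga_indep : forall (s : seq int) (xs : int -> A), uniq s ->
               (forall k, xs k \in deg k) -> \sum_(k <- s) xs k = 0 ->
               forall k, k \in s -> xs k = 0;
  dga_hom1 : 1 \in deg 0;
  dga_homM : forall p q x y, x \in deg p -> y \in deg q -> x * y \in deg (p + q);
  dga_lin : forall (c : R) x y, d (c *: x + y) = c *: d x + d y;
  dga_homd : forall p x, x \in deg p -> d x \in deg (p + 1);
  dga_dd : forall x, d (d x) = 0;
  dga_leibniz : forall p q x y, x \in deg p -> y \in deg q ->
               d (x * y) = d x * y + sgnz p *: (x * d y);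
  dga_gcomm : forall p q x y, x \in deg p -> y \in deg q ->
               x * y = sgnz (p * q) *: (y * x)
}.

Definition closed_el {A : zmodType} (d : A -> A) (x : A) := d x = 0.
Definition exact_el {A : zmodType} (d : A -> A) (x : A) := exists y, x = d y.
(* [x] = [y] in H(A) = ker d / im d (for closed x, y). *)
Definition cohomologous {A : zmodType} (d : A -> A) (x y : A) :=
  exists z, x - y = d z.

(* The element  sum_i  bar(xi_1) ... bar(xi_{i-1}) b_i xi_{i+1} ... xi_n,
   where bar(x) = (-1)^{|x|} x and |xi_j| = p + q_j - 1. *)
Definition massey_elt (R : realType) (A : algType R) (n : nat)
    (p : int) (q : 'I_n -> int) (b xi : 'I_n -> A) : A :=
  \sum_(i < n)
    ((\prod_(j < n | (j < i)%N) (sgnz (p + q j - 1) *: xi j)) * b i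
      * \prod_(j < n | (i < j)%N) xi j).

Definition massey_rep (R : realType) (A : algType R) (deg : int -> pred A)
    (d : A -> A) (n : nat) (p : int) (q : 'I_n -> int) (a : A) (b : 'I_n -> A)
    (x : A) : Prop :=
  exists xi : 'I_n -> A,
    (forall i, xi i \in deg (p + q i - 1)) /\
    (forall i, d (xi i) = a * b i) /\
    x = massey_elt p q b xi.

Definition in_massey (R : realType) (A : algType R) (deg : int -> pred A)
    (d : A -> A) (n : nat) (p : int) (q : 'I_n -> int) (a : A) (b : 'I_n -> A)
    (c : A) : Prop :=
  exists x, massey_rep deg d p q a b x /\ cohomologous d c x.

(* Main.v *)
Require Import Defs.
From HB Require Import structures.
From mathcomp Require Import all_boot all_order all_algebra.
From mathcomp Require Import reals.
Import Order.TTheory GRing.Theory Num.Theory.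
Local Open Scope ring_scope.
Set Implicit Arguments. Unset Strict Implicit.

Lemma sgnzE (R : realType) (z : int) : sgnz z = ((-1 : R) ^ z).
Proof.
case: z => n; rewrite /sgnz //=.
rewrite /exprz. by rewrite -exprVn invrN1.
Qed.

Lemma sgnzD (R : realType) (x y : int) : sgnz (x + y) = sgnz x * sgnz y :> R.
Proof. by rewrite !sgnzE expfzDr // oppr_eq0 oner_eq0. Qed.

Lemma sgnzN1 (R : realType) : sgnz (-1) = -1 :> R.
Proof. by rewrite /sgnz /= expr1. Qed.

Lemma sgnz_sq (R : realType) (x : int) : sgnz x * sgnz x = 1 :> R.
Proof. by rewrite /sgnz -exprD -signr_odd oddD addbb. Qed.

Lemma sgnz_pm (R : realType) (x : int) : sgnz x = 1 :> R \/ sgnz x = -1 :> R.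
Proof. rewrite /sgnz -signr_odd; case: (odd _); [right|left]; by rewrite ?expr1 ?expr0. Qed.

Lemma sgnzM (R : realType) (x y : int) : sgnz (x * y) = ((sgnz y) ^ x) :> R.
Proof. by rewrite !sgnzE exprz_exp mulrC. Qed.

Lemma sgnzM_odd (R : realType) (x y : int) : sgnz y = -1 :> R -> sgnz (x * y) = sgnz x :> R.
Proof. by move=> h; rewrite sgnzM h sgnzE. Qed.

Lemma sgnzM_even (R : realType) (x y : int) : sgnz x = 1 :> R -> sgnz (x * y) = 1 :> R.
Proof. by move=> h; rewrite mulrC sgnzM h exp1rz. Qed.

Lemma sgnz_even (R : realType) (p : int) : ~~ odd `|p|%N -> sgnz p = 1 :> R.
Proof. by move=> h; rewrite /sgnz -signr_odd (negbTE h) expr0. Qed.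

Lemma d0 (R : realType) (A : algType R) (deg : int -> pred A) (d : A -> A) (HA : is_dga deg d) : d 0 = 0.
Proof.
have := dga_lin HA 1 0 0; rewrite !scale1r addr0 => h.
by apply: (@addrI _ (d 0)); rewrite addr0 -h.
Qed.

Lemma dD (R : realType) (A : algType R) (deg : int -> pred A) (d : A -> A) (HA : is_dga deg d) x y : d (x + y) = d x + d y.
Proof. by have := dga_lin HA 1 x y; rewrite !scale1r. Qed.

Lemma dZ (R : realType) (A : algType R) (deg : int -> pred A) (d : A -> A) (HA : is_dga deg d) c x : d (c *: x) = c *: d x.
Proof. by have := dga_lin HA c x 0; rewrite !addr0 (d0 HA) addr0. Qed.

Lemma dN (R : realType) (A : algType R) (deg : int -> pred A) (d : A -> A) (HA : is_dga deg d) x : d (- x) = - d x.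
Proof. by rewrite -scaleN1r (dZ HA) scaleN1r. Qed.

Lemma dB (R : realType) (A : algType R) (deg : int -> pred A) (d : A -> A) (HA : is_dga deg d) x y : d (x - y) = d x - d y.
Proof. by rewrite (dD HA) (dN HA). Qed.

Lemma d_sum (R : realType) (A : algType R) (deg : int -> pred A) (d : A -> A) (HA : is_dga deg d) (I : Type) (s : seq I) (P : pred I) (F : I -> A) :
  d (\sum_(i <- s | P i) F i) = \sum_(i <- s | P i) d (F i).
Proof.
elim: s => [|x s IH]; first by rewrite !big_nil (d0 HA).
rewrite !big_cons; case: (P x) => //; by rewrite (dD HA) IH.
Qed.

Lemma homD (R : realType) (A : algType R) (deg : int -> pred A) (d : A -> A) (HA : is_dga deg d) k x y :
  x \in deg k -> y \in deg k -> x + y \in deg k.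
Proof. by move=> hx hy; have := dga_homL HA 1 hx hy; rewrite scale1r. Qed.

Lemma homZ (R : realType) (A : algType R) (deg : int -> pred A) (d : A -> A) (HA : is_dga deg d) k c x :
  x \in deg k -> c *: x \in deg k.
Proof. by move=> hx; have := dga_homL HA c hx (dga_hom0 HA k); rewrite addr0. Qed.

Lemma homB (R : realType) (A : algType R) (deg : int -> pred A) (d : A -> A) (HA : is_dga deg d) k x y :
  x \in deg k -> y \in deg k -> x - y \in deg k.
Proof. by move=> hx hy; rewrite -scaleN1r; apply: (homD HA) => //; apply: (homZ HA). Qed.

Lemma hom_sum (R : realType) (A : algType R) (deg : int -> pred A) (d : A -> A) (HA : is_dga deg d) k (I : Type) (s : seq I) (P : pred I) (F : I -> A) :
  (forall i, P i -> F i \in deg k) -> \sum_(i <- s | P i) F i \in deg k.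
Proof.
move=> h; elim: s => [|x s IH]; first by rewrite big_nil (dga_hom0 HA).
rewrite big_cons; case: ifP => // Px; exact: (homD HA) (h _ Px) IH.
Qed.

Lemma homd (R : realType) (A : algType R) (deg : int -> pred A) (d : A -> A) (HA : is_dga deg d) k x :
  x \in deg k -> d x \in deg (k + 1).
Proof. exact: dga_homd. Qed.

Lemma leib (R : realType) (A : algType R) (deg : int -> pred A) (d : A -> A) (HA : is_dga deg d) k x y :
  x \in deg k -> d (x * y) = d x * y + sgnz k *: (x * d y).
Proof.
move=> hx; have [s [ys [hy ->]]] := dga_span HA y.
rewrite mulr_sumr !(d_sum HA) mulr_sumr mulr_sumr scaler_sumr -big_split /=.
apply: eq_bigr => j _; exact: dga_leibniz hx (hy j).
Qed.

Lemma central (R : realType) (A : algType R) (deg : int -> pred A) (d : A -> A) (HA : is_dga deg d) k x y :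
  sgnz k = 1 :> R -> x \in deg k -> x * y = y * x.
Proof.
move=> hk hx; have [s [ys [hy ->]]] := dga_span HA y.
rewrite mulr_sumr mulr_suml; apply: eq_bigr => j _.
by rewrite (dga_gcomm HA hx (hy j)) (sgnzM_even _ hk) scale1r.
Qed.

Lemma d_sq0 (R : realType) (A : algType R) (deg : int -> pred A) (d : A -> A) (HA : is_dga deg d) k u :
  sgnz k = -1 :> R -> u \in deg k -> u * u = 0.
Proof.
move=> hk hu; have := dga_gcomm HA hu hu; rewrite (sgnzM_odd _ hk) hk scaleN1r.
move/eqP; rewrite -subr_eq0 opprK -mulr2n => /eqP h.
have : (2%:R : R) *: (u * u) = 0 by rewrite scaler_nat.
by move/eqP; rewrite scaler_eq0 pnatr_eq0 /= => /eqP.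
Qed.

Lemma sum_pick (A : zmodType) (I : eqType) (r : seq I) (i : I) (F : I -> A) :
  uniq r -> i \in r -> \sum_(j <- r) (if j == i then F j else 0) = F i.
Proof.
move=> ur ir; rewrite (big_rem i ir) /= eqxx big1_seq ?addr0 // => j /andP [_ jr].
case: eqP => // ji; subst j; move: jr; by rewrite mem_rem_uniqF.
Qed.

Lemma exact_hom (R : realType) (A : algType R) (deg : int -> pred A) (d : A -> A) (HA : is_dga deg d)
  K x w : x \in deg K -> x = d w -> exists w', w' \in deg (K - 1) /\ x = d w'.
Proof.
move=> hx hw; have [s [ws [hws ew]]] := dga_span HA w.
pose ys k := \sum_(j <- s | j == k) ws j.
have hys k : ys k \in deg k.
  apply: (hom_sum HA) => j /eqP ->; exact: hws.
pose S := undup (K :: [seq j + 1 | j <- s]).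
pose zs m := d (ys (m - 1)) - (if m == K then x else 0).
have hzs m : zs m \in deg m.
  apply: (homB HA); first by have := homd HA (hys (m - 1)); rewrite subrK.
  case: ifP => [/eqP ->|_] //. exact: (dga_hom0 HA m).
have KS : K \in S by rewrite mem_undup mem_head.
have sum0 : \sum_(m <- S) zs m = 0.
  rewrite sumrB (sum_pick _ (undup_uniq _) KS).
  have -> : \sum_(m <- S) d (ys (m - 1)) = \sum_(j <- s) d (ws j).
    transitivity (\sum_(m <- S) \sum_(j <- s) (if m == j + 1 then d (ws j) else 0)).
      apply: eq_bigr => m _; rewrite /ys (d_sum HA) big_mkcond /=.
      apply: eq_bigr => j _; by rewrite eq_sym subr_eq.
    rewrite exchange_big /=; apply: eq_big_seq => j js.
    rewrite (eq_bigr (fun m => if m == j + 1 then d (ws j) else 0)); last first.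
      by move=> m _; case: eqP => // ->.
    rewrite (sum_pick (fun m => d (ws j)) (undup_uniq _)) //.
    rewrite mem_undup in_cons; apply/orP; right; apply/mapP; exists j => //.
  by have := d_sum HA s xpredT ws; rewrite -ew -hw => <-; rewrite subrr.
have := dga_indep HA (undup_uniq _) hzs sum0 KS.
rewrite /zs eqxx => /eqP; rewrite subr_eq0 => /eqP h.
by exists (ys (K - 1)); split.
Qed.

Definition Pr (R : realType) (A : algType R) n (xi : 'I_n -> A) := \prod_(j < n) xi j.

Lemma Pr_rec (R : realType) (A : algType R) n (xi : 'I_n.+1 -> A) :
  Pr xi = xi ord0 * Pr (fun j : 'I_n => xi (lift ord0 j)).
Proof. by rewrite /Pr big_ord_recl. Qed.

Lemma Pr0 (R : realType) (A : algType R) (xi : 'I_0 -> A) : Pr xi = 1.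
Proof. by rewrite /Pr big_ord0. Qed.

Lemma M0 (R : realType) (A : algType R) p q (b xi : 'I_0 -> A) : massey_elt p q b xi = 0.
Proof. by rewrite /massey_elt big_ord0. Qed.

Lemma M_rec (R : realType) (A : algType R) n p (q : 'I_n.+1 -> int) (b xi : 'I_n.+1 -> A) :
  massey_elt p q b xi = b ord0 * Pr (fun j : 'I_n => xi (lift ord0 j)) +
    (sgnz (p + q ord0 - 1) *: xi ord0) *
    massey_elt p (fun j : 'I_n => q (lift ord0 j)) (fun j : 'I_n => b (lift ord0 j)) (fun j : 'I_n => xi (lift ord0 j)).
Proof.
rewrite /massey_elt big_ord_recl; congr (_ + _).
  rewrite big_pred0 // mul1r big_mkcond big_ord_recl /= mul1r /Pr //.
rewrite mulr_sumr; apply: eq_bigr => i _.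
rewrite (big_mkcond (fun j : 'I_n.+1 => (j < lift ord0 i)%N)) big_ord_recl /=.
rewrite (big_mkcond (fun j : 'I_n.+1 => (lift ord0 i < j)%N)) big_ord_recl /=.
rewrite mul1r !mulrA; congr (_ * _ * _).
  congr (_ * _); rewrite [RHS]big_mkcond; apply: eq_bigr => j _.
  by rewrite /bump !add1n ltnS.
rewrite [RHS]big_mkcond; apply: eq_bigr => j _.
by rewrite /bump !add1n ltnS.
Qed.

Lemma d1 (R : realType) (A : algType R) (deg : int -> pred A) (d : A -> A) (HA : is_dga deg d) :
  d 1 = 0.
Proof.
have := leib HA (1 : A) (dga_hom1 HA); rewrite mulr1 mul1r.
have -> : sgnz 0 = 1 :> R by rewrite /sgnz expr0.
rewrite scale1r mulr1 => h; by apply: (@addrI _ (d 1)); rewrite addr0 -h.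
Qed.

Lemma dPr (R : realType) (A : algType R) (deg : int -> pred A) (d : A -> A) (HA : is_dga deg d)
  p a : sgnz p = 1 :> R -> a \in deg p ->
  forall n (q : 'I_n -> int) (b z : 'I_n -> A),
  (forall i, z i \in deg (p + q i - 1)) -> (forall i, d (z i) = a * b i) ->
  d (Pr z) = a * massey_elt p q b z.
Proof.
move=> hp ha; elim=> [|n IH] q b z hz hd.
  by rewrite Pr0 M0 (d1 HA) mulr0.
rewrite Pr_rec M_rec (leib HA _ (hz ord0)) hd.
rewrite (IH (fun j : 'I_n => q (lift ord0 j)) (fun j : 'I_n => b (lift ord0 j))) //.
rewrite mulrDr !mulrA; congr (_ + _).
by rewrite -scalerAr -scalerAl -(central HA (z ord0) hp ha).
Qed.

Lemma L2 (R : realType) (A : algType R) (deg : int -> pred A) (d : A -> A) (HA : is_dga deg d)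
  p u : sgnz p = 1 :> R -> u \in deg (p - 1) ->
  forall n (q : 'I_n -> int) (b z : 'I_n -> A),
  (forall i, z i \in deg (p + q i - 1)) -> (forall i, b i \in deg (q i)) ->
  Pr (fun i => z i + u * b i) = Pr z + u * massey_elt p q b z /\
  massey_elt p q b (fun i => z i + u * b i) = massey_elt p q b z.
Proof.
move=> hp hu; have hu1 : sgnz (p - 1) = -1 :> R by rewrite sgnzD hp sgnzN1 mul1r.
have uu : u * u = 0 := d_sq0 HA hu1 hu.
elim=> [|n IH] q b z hz hb.
  by rewrite !Pr0 !M0 mulr0 addr0.
have [IH1 IH2] := IH (fun j : 'I_n => q (lift ord0 j)) (fun j : 'I_n => b (lift ord0 j))
   (fun j : 'I_n => z (lift ord0 j)) (fun j => hz _) (fun j => hb _).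
pose e0 : R := sgnz (p + q ord0 - 1).
have he0 : e0 = - sgnz (q ord0) by rewrite /e0 -addrA !sgnzD hp sgnzN1 mul1r mulrN1.
have F1 : z ord0 * u = e0 *: (u * z ord0).
  by rewrite (dga_gcomm HA (hz ord0) hu) (sgnzM_odd _ hu1).
have F2 : b ord0 * u = - e0 *: (u * b ord0).
  by rewrite (dga_gcomm HA (hb ord0) hu) (sgnzM_odd _ hu1) he0 opprK.
rewrite !Pr_rec !M_rec /= IH1 IH2 -/e0.
set Pt := Pr (fun j : 'I_n => z (lift ord0 j)).
set Mt := massey_elt p (fun j : 'I_n => q (lift ord0 j)) (fun j : 'I_n => b (lift ord0 j)) (fun j : 'I_n => z (lift ord0 j)).
split.
  have e1 : z ord0 * (u * Mt) = u * ((e0 *: z ord0) * Mt).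
    by rewrite mulrA F1 -!scalerAl -scalerAr mulrA.
  have e2 : u * b ord0 * (u * Mt) = 0.
    by rewrite -mulrA (mulrA (b ord0)) F2 -scalerAl -scalerAr !mulrA uu !mul0r scaler0.
  rewrite mulrDl !mulrDr e1 e2 addr0 !mulrA -!addrA; congr (_ + _); exact: addrC.
rewrite mulrDr scalerDr mulrDl -!addrA; congr (_ + _).
by rewrite mulrA F2 -!scalerAl addrCA scaleNr addNr addr0.
Qed.

Lemma arr (V : zmodType) (x y z w u v : V) : (x + y) + (z + w) - (u + v) = (x - u) + (z - v) + (y + w).
Proof. by rewrite opprD (addrACA x y z w) (addrACA x (-u) z (-v)) [LHS]addrAC. Qed.

Lemma L1 (R : realType) (A : algType R) (deg : int -> pred A) (d : A -> A) (HA : is_dga deg d)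
  p a : sgnz p = 1 :> R -> a \in deg p -> d a = 0 ->
  forall n (q : 'I_n -> int) (b b' z v : 'I_n -> A),
  (forall i, z i \in deg (p + q i - 1)) -> (forall i, v i \in deg (q i - 1)) ->
  (forall i, d (z i) = a * b i) -> (forall i, b' i = b i + d (v i)) ->
  exists E, Pr (fun i => z i + a * v i) = Pr z + a * E /\
  massey_elt p q b' (fun i => z i + a * v i) - massey_elt p q b z = d E.
Proof.
move=> hp ha da; elim=> [|n IH] q b b' z v hz hv hd hb'.
  by exists 0; rewrite !Pr0 !M0 mulr0 addr0 subr0 (d0 HA).
have [Et [IH1 IH2]] := IH (fun j : 'I_n => q (lift ord0 j)) (fun j : 'I_n => b (lift ord0 j))
   (fun j : 'I_n => b' (lift ord0 j))
   (fun j : 'I_n => z (lift ord0 j)) (fun j : 'I_n => v (lift ord0 j))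
   (fun j => hz _) (fun j => hv _) (fun j => hd _) (fun j => hb' _).
pose e0 : R := sgnz (p + q ord0 - 1).
have he0 : sgnz (q ord0 - 1) = e0 by rewrite /e0 -addrA [in RHS]sgnzD hp mul1r.
have dav : d (a * v ord0) = a * d (v ord0).
  by rewrite (leib HA _ ha) da mul0r add0r hp scale1r.
pose z0 := z ord0 + a * v ord0.
have dz0 : d z0 = a * b' ord0 by rewrite (dD HA) dav hd hb' mulrDr.
have hz0 : z0 \in deg (p + q ord0 - 1).
  apply: (homD HA); first exact: hz. rewrite -addrA; apply: (dga_homM HA) => //; exact: hv.
have dPt := dPr HA hp ha (fun j : 'I_n => hz (lift ord0 j)) (fun j : 'I_n => hd (lift ord0 j)).
have ca x : a * x = x * a := central HA x hp ha.
rewrite !Pr_rec !M_rec /= IH1 -/e0 -/z0.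
move: IH2 dPt.
set Pt := Pr (fun j : 'I_n => z (lift ord0 j)).
set Mt := massey_elt p (fun j : 'I_n => q (lift ord0 j)) (fun j : 'I_n => b (lift ord0 j)) (fun j : 'I_n => z (lift ord0 j)).
set M't := massey_elt _ _ _ _.
move=> IH2 dPt.
exists (v ord0 * Pt + z0 * Et); split.
  by rewrite !mulrDr {1}/z0 mulrDl -!addrA !mulrA (ca z0).
have eM : M't = Mt + d Et by rewrite -IH2 addrC subrK.
have hdb : b' ord0 - b ord0 = d (v ord0) by rewrite hb' addrC addKr.
have hdz : z0 - z ord0 = a * v ord0 by rewrite /z0 addrC addKr.
rewrite eM (dD HA) (leib HA _ (hv ord0)) (leib HA _ hz0) dz0 dPt he0 -/e0.
rewrite mulrDr (mulrDr (e0 *: z0)) arr -mulrBl hdb -mulrBl -scalerBr hdz.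
congr (_ + _ + _).
  by rewrite -scalerAl (mulrA (v ord0)) -ca.
congr (_ + _); first by rewrite mulrA ca.
by rewrite scalerAl.
Qed.

Lemma transfer (R : realType) (A : algType R) (deg : int -> pred A) (d : A -> A) (HA : is_dga deg d)
  n p (q : 'I_n -> int) (a a' u : A) (b b' v : 'I_n -> A) :
  sgnz p = 1 :> R -> a' \in deg p -> d a' = 0 ->
  (forall i, b i \in deg (q i)) -> (forall i, d (b i) = 0) ->
  u \in deg (p - 1) -> a' - a = d u ->
  (forall i, v i \in deg (q i - 1)) -> (forall i, b' i - b i = d (v i)) ->
  forall c, in_massey deg d p q a b c -> in_massey deg d p q a' b' c.
Proof.
move=> hp ha' da' hb db hu eu hv ev c [x [[xi [hxi [hdxi ->]]] [w hw]]].
pose z i := xi i + u * b i.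
have hz i : z i \in deg (p + q i - 1).
  apply: (homD HA); first exact: hxi.
  rewrite addrAC; exact: (dga_homM HA hu (hb i)).
have dz i : d (z i) = a' * b i.
  by rewrite (dD HA) hdxi (leib HA _ hu) db mulr0 scaler0 addr0 -eu -mulrDl addrC subrK.
have [_ eM] := L2 HA hp hu hxi hb.
have eb i : b' i = b i + d (v i) by rewrite -ev addrC subrK.
have [E [_ hE]] := L1 HA hp ha' da' hz hv dz eb.
exists (massey_elt p q b' (fun i => z i + a' * v i)); split.
  exists (fun i => z i + a' * v i); split; [|split] => // i.
    apply: (homD HA); first exact: hz.
    rewrite -addrA; exact: (dga_homM HA ha' (hv i)).
  by rewrite (dD HA) dz (leib HA _ ha') da' mul0r add0r hp scale1r -mulrDr -ev addrC subrK.
exists (w - E); rewrite (dB HA) -hw -hE.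
by rewrite [massey_elt p q b z]eM opprB addrA subrK.
Qed.

Theorem lemma2p5 (R : realType) (A : algType R) (deg : int -> pred A)
    (d : A -> A) (HA : is_dga deg d)
    (n : nat) (p : int) (q : 'I_n -> int)
    (a a' : A) (b b' : 'I_n -> A) :
  ~~ odd `|p|%N ->
  a \in deg p -> closed_el d a ->
  (forall i, b i \in deg (q i)) -> (forall i, closed_el d (b i)) ->
  (forall i, exact_el d (a * b i)) ->
  a' \in deg p -> closed_el d a' -> cohomologous d a' a ->
  (forall i, b' i \in deg (q i)) -> (forall i, closed_el d (b' i)) ->
  (forall i, cohomologous d (b' i) (b i)) ->
  (forall i, exact_el d (a' * b' i)) /\
  (forall c : A, in_massey deg d p q a' b' c <-> in_massey deg d p q a b c).
Proof.
move=> hpo ha da hb db hex ha' da' [z0 hz0] hb' db' hcb.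
have hp : sgnz p = 1 :> R := sgnz_even R hpo.
have [u [hu eu]] := exact_hom HA (homB HA ha' ha) hz0.
have : forall i, exists v, v \in deg (q i - 1) /\ b' i - b i = d v.
  move=> i; have [zi hzi] := hcb i; apply: (exact_hom HA _ hzi); exact: (homB HA (hb' i) (hb i)).
case/fin_all_exists => v hv.
have hv1 i := (hv i).1; have ev i := (hv i).2.
split.
  move=> i; have [y hy] := hex i.
  exists (y + u * b i + a' * v i).
  rewrite !(dD HA) -hy (leib HA _ hu) db mulr0 scaler0 addr0 (leib HA _ ha') da' mul0r add0r hp scale1r.
  by rewrite -eu -ev -mulrDl (addrC a) subrK -mulrDr (addrC (b i)) subrK.
move=> c; split.
  apply: (transfer HA hp ha da hb' db' (u := - u) (v := fun i => - v i)).
  - by rewrite -scaleN1r; exact: (homZ HA).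
  - by rewrite (dN HA) -eu opprB.
  - by move=> i; rewrite -scaleN1r; exact: (homZ HA).
  - by move=> i; rewrite (dN HA) -ev opprB.
exact: (transfer HA hp ha' da' hb db hu eu hv1 ev).
Qed.
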